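(* Let $q$ be a prime power and let $n,k$ be integers with $3\le k\le n-2\le q-2$. Let $\alpha_1,\dots,\alpha_n\in\mathbb{F}_q$ be pairwise distinct, and let $C_{k-1,k-2}$ be the linear code generated by the $k\times n$ matrix $G_{k-1,k-2}$ whose rows are $(\alpha_1^{e},\dots,\alpha_n^{e})$ for $e=0,1,\dots,k-3,k,k+1$. For $1\le i\le n$ let $u_i=\prod_{1\le j\le n,\,j\ne i}(\alpha_i-\alpha_j)^{-1}$, and let $\sigma_t=\sigma_t(\alpha_1,\dots,\alpha_n)$. Define $$\Lambda_i=\alpha_i^{n-k+1}-\sigma_1\alpha_i^{n-k}+\sigma_2\alpha_i^{n-k-1}-\sigma_3\alpha_i^{n-k-2},\qquad \Gamma_i=\alpha_i^{n-k}-\sigma_1\alpha_i^{n-k-1}+\sigma_2\alpha_i^{n-k-2}.$$ Then the $(n-k)\times n$ matrix $H_{k-1,k-2}$ whose rows are $(u_1\alpha_1^{j},\dots,u_n\alpha_n^{j})$ for $j=0,1,\dots,n-k-3$, followed by $(u_1\Lambda_1,\dots,u_n\Lambda_n)$ and $(u_1\Gamma_1,\dots,u_n\Gamma_n)$, is a parity-check matrix for $C_{k-1,k-2}$.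
   Context: Convention: $0^0=1$. For variables $x_1,\dots,x_m$, $\sigma_t(x_1,\dots,x_m)$ denotes the $t$-th elementary symmetric polynomial, with $\sigma_0=1$ and $\sigma_t=0$ for $t>m$. A parity-check matrix of an $[n,k]$ code $C$ is an $(n-k)\times n$ matrix of rank $n-k$ whose rows span the dual code $C^\perp$ (Euclidean inner product). *)

(* Defs.v *)
From HB Require Import structures.
From mathcomp Require Import all_boot all_order all_algebra.
Set Implicit Arguments. Unset Strict Implicit. Unset Printing Implicit Defensive.
Import GRing.Theory.
Local Open Scope ring_scope.

Definition esym (F : fieldType) (n t : nat) (alpha : 'I_n -> F) : F :=
  \sum_(S : {set 'I_n} | #|S| == t) \prod_(i in S) alpha i.

Definition uvec (F : fieldType) (n : nat) (alpha : 'I_n -> F) (i : 'I_n) : F :=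
  \prod_(j < n | j != i) (alpha i - alpha j)^-1.

Definition Gexp (k : nat) (r : nat) : nat := if (r < k - 2)%N then r else (r + 2)%N.

Definition Gmat (F : fieldType) (n k : nat) (alpha : 'I_n -> F) : 'M[F]_(k, n) :=
  \matrix_(r < k, i < n) alpha i ^+ Gexp k r.

Definition Lambda (F : fieldType) (n k : nat) (alpha : 'I_n -> F) (i : 'I_n) : F :=
  alpha i ^+ (n - k + 1) - esym 1 alpha * alpha i ^+ (n - k)
  + esym 2 alpha * alpha i ^+ (n - k - 1) - esym 3 alpha * alpha i ^+ (n - k - 2).

Definition Gamma (F : fieldType) (n k : nat) (alpha : 'I_n -> F) (i : 'I_n) : F :=
  alpha i ^+ (n - k) - esym 1 alpha * alpha i ^+ (n - k - 1)
  + esym 2 alpha * alpha i ^+ (n - k - 2).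

Definition Hmat (F : fieldType) (n k : nat) (alpha : 'I_n -> F) : 'M[F]_(n - k, n) :=
  \matrix_(j < n - k, i < n)
    (uvec alpha i *
     (if (val j < n - k - 2)%N then alpha i ^+ val j
      else if (val j == n - k - 2)%N then Lambda k alpha i
      else Gamma k alpha i)).

Definition is_parity_check (F : fieldType) (r m n : nat)
    (G : 'M[F]_(r, n)) (H : 'M[F]_(m, n)) : Prop :=
  \rank H = m /\
  forall v : 'rV[F]_n,
    (v <= H)%MS <-> (forall c : 'rV[F]_n, (c <= G)%MS -> c *m v^T = 0).

(* Main.v *)
Require Import Defs.
From mathcomp Require Import all_boot all_order all_algebra.
From mathcomp Require Import zify ring.
Set Implicit Arguments. Unset Strict Implicit. Unset Printing Implicit Defensive.
Import GRing.Theory.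
Local Open Scope ring_scope.

Section S.
Variables (F : fieldType) (n : nat) (alpha : 'I_n -> F).
Hypothesis ainj : injective alpha.

Lemma poly_zero_pts (p : {poly F}) :
  (size p <= n)%N -> (forall i, p.[alpha i] = 0) -> p = 0.
Proof.
move=> sp hr; apply/eqP; apply/negPn/negP => p0.
have := max_poly_roots p0 (rs := map alpha (enum 'I_n)).
rewrite size_map size_enum_ord.
have -> : all (root p) [seq alpha i | i <- enum 'I_n].
  by apply/allP => x /mapP [i _ ->]; apply/eqP/hr.
rewrite map_inj_uniq ?enum_uniq // => /(_ isT isT) h.
by move: (leq_trans h sp); rewrite ltnn.
Qed.

Definition Lp (i : 'I_n) : {poly F} := \prod_(j < n | j != i) ('X - (alpha j)%:P).

Lemma size_Lp i : size (Lp i) = n.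
Proof.
have := size_prod_XsubC (index_enum 'I_n) alpha.
have -> : size (index_enum 'I_n) = n by rewrite /index_enum -enumT size_enum_ord.
rewrite (bigD1 i) //= size_mul ?polyXsubC_eq0 ?monic_neq0 ?monic_prod_XsubC //.
by rewrite size_XsubC /Lp; case.
Qed.

Lemma coef_Lp i : (Lp i)`_n.-1 = 1.
Proof.
have := lead_coef_prod_XsubC (index_enum 'I_n) (fun j => j != i) alpha.
by rewrite lead_coefE -/(Lp i) size_Lp.
Qed.

Lemma Lp_eval i m : (Lp i).[alpha m] = if m == i then (uvec alpha i)^-1 else 0.
Proof.
rewrite /Lp horner_prod /uvec; case: eqP => [->|/eqP ne].
  rewrite prodfV invrK; apply: eq_bigr => j _; by rewrite hornerXsubC.
rewrite (bigD1 m) //= hornerXsubC subrr mul0r //.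
Qed.

Lemma sum_u (p : {poly F}) : (0 < n)%N -> (size p <= n)%N ->
  \sum_i uvec alpha i * p.[alpha i] = p`_n.-1.
Proof.
move=> n0 sp.
have u0 : forall i, uvec alpha i != 0.
  move=> i; rewrite /uvec prodf_seq_neq0; apply/allP => j _; apply/implyP => ji.
  by rewrite invr_eq0 subr_eq0; apply/eqP => /ainj h; move: ji; rewrite h eqxx.
set Q := \sum_i (uvec alpha i * p.[alpha i]) *: Lp i.
have pQ : p = Q.
  apply/eqP; rewrite -subr_eq0; apply/eqP; apply: poly_zero_pts.
    apply: leq_trans (size_add _ _) _; rewrite geq_max sp size_opp.
    apply: leq_trans (size_sum _ _ _) _; apply/bigmax_leqP => i _.
    by apply: leq_trans (size_scale_leq _ _) _; rewrite size_Lp.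
  move=> m; rewrite hornerD hornerN horner_sum.
  rewrite (bigD1 m) //= big1 ?addr0.
    by rewrite hornerZ Lp_eval eqxx mulrAC mulfV ?u0 // mul1r subrr.
  by move=> i /negPf ne; rewrite hornerZ Lp_eval eq_sym ne mulr0.
rewrite [in RHS]pQ coef_sum; apply: eq_bigr => i _; by rewrite coefZ coef_Lp mulr1.
Qed.
Lemma coefP m : (m <= n)%N ->
  (\prod_(i < n) ('X - (alpha i)%:P))`_m = (-1) ^+ (n - m)%N * Defs.esym (n - m)%N alpha.
Proof.
move=> mle.
under eq_bigr => i _ do rewrite addrC -raddfN/=.
rewrite bigA_distr /= coef_sum /Defs.esym.
transitivity (\sum_(I in {set 'I_n}) if #|I| == (n - m)%N then
                  \prod_(i < n | i \in I) - alpha i else 0).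
  apply eq_bigr => I _.
  rewrite big_if/= big_const iter_mulr_1 -rmorph_prod/= coefCM coefXn.
  rewrite -[#|I| == _](eqn_add2r m) subnK//.
  rewrite -[X in (_ + _)%N == X]card_ord -(cardC I) eqn_add2l.
  by case: ifP; rewrite ?mulr1 ?mulr0.
by rewrite -big_mkcond mulr_sumr/=; apply: eq_bigr => I /eqP <-; rewrite prodrN.
Qed.

Lemma esym0 : Defs.esym 0 alpha = 1.
Proof.
rewrite /Defs.esym (big_pred1 set0) ?big_set0 // => S /=.
by rewrite cards_eq0.
Qed.

Definition s1 := Defs.esym 1 alpha.
Definition s2 := Defs.esym 2 alpha.
Definition s3 := Defs.esym 3 alpha.
Definition P : {poly F} := \prod_(i < n) ('X - (alpha i)%:P).
Definition T2 : {poly F} := 'X^2 - s1 *: 'X + s2%:P.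
Definition T : {poly F} := 'X * T2 - s3%:P.
Definition R : {poly F} := P - 'X^(n-3) * T.

Lemma size_T2 : (size T2 <= 3)%N.
Proof. apply/leq_sizeP => j hj; rewrite /T2 !coefE; case: j hj => [|[|[|j]]] //= _; by rewrite !mulr0 subrr addr0. Qed.

Lemma size_T : (size T <= 4)%N.
Proof. apply/leq_sizeP => j hj; rewrite /T !coefE; case: j hj => [|[|[|[|j]]]] //= _.
by rewrite !(mulr0, subr0, add0r, addr0, sub0r, oppr0).
Qed.

Lemma size_P : size P = n.+1.
Proof.
rewrite /P size_prod_XsubC; congr S; by rewrite /index_enum -enumT size_enum_ord.
Qed.

Lemma size_R : (3 <= n)%N -> (size R <= n - 3)%N.
Proof.
move=> n3; apply/leq_sizeP => j hj; rewrite /R coefB coefXnM ltnNge hj /=.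
have [t ->] : exists t, j = (n - 3 + t)%N by exists (j - (n-3))%N; lia.
rewrite addKn.
case: t => [|[|[|[|t]]]].
- rewrite coefP; last lia.
  have -> : (n - (n - 3 + 0) = 3)%N by lia.
  rewrite /T /T2 !coefE /= /s3; ring.
- rewrite coefP; last lia.
  have -> : (n - (n - 3 + 1) = 2)%N by lia.
  rewrite /T /T2 !coefE /= /s2; ring.
- rewrite coefP; last lia.
  have -> : (n - (n - 3 + 2) = 1)%N by lia.
  rewrite /T /T2 !coefE /= /s1; ring.
- rewrite coefP; last lia.
  have -> : (n - (n - 3 + 3) = 0)%N by lia.
  rewrite /T /T2 !coefE /= esym0; ring.
- have -> : T`_t.+4 = 0 by apply/leq_sizeP; [exact: size_T|].
  have -> : P`_(n - 3 + t.+4) = 0.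
    apply/leq_sizeP; last by instantiate (1 := n.+1); lia.
    by rewrite size_P.
  by rewrite subr0.
Qed.

Lemma P_root i : P.[alpha i] = 0.
Proof. by rewrite /P horner_prod (bigD1 i) //= hornerXsubC subrr mul0r. Qed.

Lemma size_XnM a (q : {poly F}) : (size ('X^a * q)%R <= a + size q)%N.
Proof.
apply: leq_trans (size_mul_leq _ _) _; rewrite size_polyXn; lia.
Qed.

Lemma sum0 (p c : {poly F}) : (0 < n)%N -> (size (p - c * P)%R <= n.-1)%N ->
  \sum_i uvec alpha i * p.[alpha i] = 0.
Proof.
move=> n0 sp.
transitivity (\sum_i uvec alpha i * (p - c * P).[alpha i]).
  by apply: eq_bigr => i _; rewrite hornerD hornerN hornerM P_root mulr0 subr0.
rewrite sum_u //; last by apply: leq_trans sp _; lia.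
by move/leq_sizeP: sp => ->.
Qed.

Variable k : nat.
Hypothesis k3 : (3 <= k)%N.
Hypothesis kn : (k + 2 <= n)%N.

Definition hp (j : nat) : {poly F} :=
  if (j < n - k - 2)%N then 'X^j
  else if j == (n - k - 2)%N then 'X^(n - k - 2) * T else 'X^(n - k - 2) * T2.

Lemma orth r j : (r < k)%N -> (j < n - k)%N ->
  \sum_i uvec alpha i * ('X^(Gexp k r) * hp j).[alpha i] = 0.
Proof.
move=> rk jk; have n0 : (0 < n)%N by lia.
rewrite /Gexp /hp; case: ifP => hr.
  case: ifP => hj1.
    apply: (sum0 (c := 0)) => //; rewrite mul0r subr0 -exprD size_polyXn; lia.
  case: ifP => hj2.
    apply: (sum0 (c := 0)) => //; rewrite mul0r subr0 mulrA -exprD.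
    apply: leq_trans (size_XnM _ _) _; have := size_T; lia.
  apply: (sum0 (c := 0)) => //; rewrite mul0r subr0 mulrA -exprD.
  apply: leq_trans (size_XnM _ _) _; have := size_T2; lia.
have [d [hd hrd]] : exists d, (d <= 1 /\ r + 2 = k + d)%N by exists (r + 2 - k)%N; lia.
rewrite hrd.
case: ifP => hj1.
  apply: (sum0 (c := 0)) => //; rewrite mul0r subr0 -exprD size_polyXn; lia.
case: ifP => hj2.
  apply: (sum0 (c := 'X^(d+1))) => //.
  have -> : 'X^(k + d) * ('X^(n - k - 2) * T) = 'X^(d+1) * ('X^(n - 3) * T).
    by rewrite !mulrA -!exprD; congr (_ * _); congr ('X^_); lia.
  have -> : 'X^(n - 3) * T = P - R by rewrite /R; ring.
  have -> : 'X^(d + 1) * (P - R) - 'X^(d + 1) * P = - ('X^(d+1) * R) by ring.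
  rewrite size_opp; apply: leq_trans (size_XnM _ _) _; have := size_R; lia.
apply: (sum0 (c := 'X^d)) => //.
have -> : 'X^(k + d) * ('X^(n - k - 2) * T2) = 'X^d * ('X^(n - 3) * ('X * T2)).
  by rewrite !mulrA -!exprD -exprSr; congr (_ * _); congr ('X^_); lia.
have -> : 'X * T2 = T + s3%:P by rewrite /T; ring.
have -> : 'X^(n - 3) * (T + s3%:P) = P - R + 'X^(n-3) * s3%:P by rewrite /R; ring.
have -> : 'X^d * (P - R + 'X^(n-3) * s3%:P) - 'X^d * P = 'X^d * ('X^(n-3) * s3%:P - R) by ring.
apply: leq_trans (size_XnM _ _) _.
have : (size ('X^(n-3) * s3%:P - R)%R <= n - 2)%N.
  apply: leq_trans (size_add _ _) _; rewrite size_opp geq_max; apply/andP; split.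
    apply: leq_trans (size_XnM _ _) _; have := size_polyC_leq1 s3; lia.
  apply: leq_trans (size_R _) _; lia.
lia.
Qed.

Lemma size_exact (p : {poly F}) m : (size p <= m.+1)%N -> p`_m != 0 -> size p = m.+1.
Proof.
move=> sp nz; apply/eqP; rewrite eqn_leq sp /= ltnNge; apply/negP => /leq_sizeP h.
by move: nz; rewrite h ?eqxx.
Qed.

Lemma indep m (p : 'I_m -> {poly F}) (w : 'I_m -> F) :
  injective (fun r => size (p r)) -> (forall r, p r != 0) ->
  \sum_r w r *: p r = 0 -> forall r, w r = 0.
Proof.
move=> sinj pnz hs r; apply/eqP/negPn/negP => wr.
case: (@arg_maxnP _ r (fun s => w s != 0) (fun s => size (p s)) wr) => r0 wr0 hmax.
have := congr1 (fun q : {poly F} => q`_(size (p r0)).-1) hs.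
rewrite /= coef_sum coef0 (bigD1 r0) //= big1.
  rewrite addr0 coefZ -lead_coefE => /eqP; rewrite mulf_eq0 lead_coef_eq0 (negPf (pnz r0)).
  by rewrite (negPf wr0).
move=> s ns; rewrite coefZ; have [->|ws] := eqVneq (w s) 0; first by rewrite mul0r.
have hle := hmax s ws.
have hne : size (p s) != size (p r0) by apply/eqP => /sinj h; rewrite h eqxx in ns.
have : (size (p s) <= (size (p r0)).-1)%N.
  have : (0 < size (p r0))%N by rewrite size_poly_gt0.
  move: hle hne; lia.
by move/leq_sizeP => ->; rewrite ?mulr0.
Qed.

Lemma rank_full m (M : 'M[F]_(m, n)) (c : 'I_n -> F) (p : 'I_m -> {poly F}) :
  (forall i, c i != 0) -> (forall r, size (p r) <= n)%N ->
  injective (fun r => size (p r)) -> (forall r, p r != 0) ->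
  (forall r i, M r i = c i * (p r).[alpha i]) -> \rank M = m.
Proof.
move=> cnz sp sinj pnz hM; apply/eqP; rewrite -[_ == _]/(row_free M) -kermx_eq0.
apply/eqP/row_matrixP => i; rewrite row0.
set w := row i (kermx M).
have : w *m M == 0 by rewrite -sub_kermx row_sub.
move/eqP => hw.
have hq : \sum_r w 0 r *: p r = 0.
  apply: poly_zero_pts.
    apply: leq_trans (size_sum _ _ _) _; apply/bigmax_leqP => r _.
    by apply: leq_trans (size_scale_leq _ _) _.
  move=> t; have := congr1 (fun A : 'rV[F]_n => A 0 t) hw.
  rewrite /= !mxE horner_sum => h.
  have : c t * (\sum_r (w 0 r *: p r).[alpha t]) = 0.
    rewrite -[RHS]h mulr_sumr; apply: eq_bigr => r _.
    by rewrite hM hornerZ; ring.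
  by move/eqP; rewrite mulf_eq0 (negPf (cnz t)) /= => /eqP.
apply/rowP => r; have := indep sinj pnz hq r; rewrite /w !mxE //.
Qed.

Lemma u_nz i : uvec alpha i != 0.
Proof.
rewrite /uvec prodf_seq_neq0; apply/allP => j _; apply/implyP => ji.
by rewrite invr_eq0 subr_eq0; apply/eqP => /ainj h; move: ji; rewrite h eqxx.
Qed.

Lemma Gentry r i : Gmat k alpha r i = 1 * ('X^(Gexp k r)).[alpha i].
Proof. by rewrite mxE hornerXn mul1r. Qed.

Lemma Grank : \rank (Gmat k alpha) = k.
Proof.
apply: (@rank_full _ _ (fun _ => 1) (fun r : 'I_k => 'X^(Gexp k r))).
- by move=> _; rewrite oner_eq0.
- move=> r; rewrite size_polyXn /Gexp; have := ltn_ord r; case: ifP; lia.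
- move=> a b /=; rewrite !size_polyXn => -[] h; apply/val_inj => /=.
  move: h (ltn_ord a) (ltn_ord b); rewrite /Gexp; case: ifP; case: ifP; lia.
- by move=> r; rewrite -size_poly_eq0 size_polyXn.
- exact: Gentry.
Qed.

Lemma Hentry j i : Hmat k alpha j i = uvec alpha i * (hp j).[alpha i].
Proof.
rewrite mxE /hp; case: ifP => h1; first by rewrite hornerXn.
have jk := ltn_ord j.
set a := (n - k - 2)%N.
case: ifP => h2; rewrite hornerM hornerXn /Lambda /Gamma /T /T2 /s1 /s2 /s3 -/a; congr (_ * _).
  have -> : (n - k - 1 = a + 1)%N by rewrite /a; lia.
  have -> : (n - k + 1 = a + 3)%N by rewrite /a; lia.
  have -> : (n - k = a + 2)%N by rewrite /a; lia.
  rewrite !hornerE !exprD; ring.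
have -> : (n - k - 1 = a + 1)%N by rewrite /a; lia.
have -> : (n - k = a + 2)%N by rewrite /a; lia.
rewrite !hornerE !exprD; ring.
Qed.

Lemma size_hp j : (j < n - k)%N -> size (hp j) =
  if (j < n - k - 2)%N then j.+1 else if j == (n - k - 2)%N then (n - k + 2)%N else (n - k + 1)%N.
Proof.
move=> jk; rewrite /hp; case: ifP => h1; first by rewrite size_polyXn.
case: ifP => h2.
  have -> : (n - k + 2 = (n - k - 2 + 3).+1)%N by lia.
  apply: size_exact.
    apply: leq_trans (size_XnM _ _) _; have := size_T; lia.
  rewrite coefXnM ltnNge leq_addr /= addKn /T /T2 !coefE /=.
  rewrite !(mulr0, subr0, add0r, addr0, sub0r, oppr0, mulr1); exact: oner_neq0.
have -> : (n - k + 1 = (n - k - 2 + 2).+1)%N by lia.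
apply: size_exact.
  apply: leq_trans (size_XnM _ _) _; have := size_T2; lia.
rewrite coefXnM ltnNge leq_addr /= addKn /T2 !coefE /=.
rewrite !(mulr0, subr0, add0r, addr0, sub0r, oppr0, mulr1); exact: oner_neq0.
Qed.

Lemma Hrank : \rank (Hmat k alpha) = (n - k)%N.
Proof.
apply: (@rank_full _ _ (uvec alpha) (fun j : 'I_(n - k) => hp j)).
- exact: u_nz.
- move=> j; rewrite size_hp //; case: ifP; [lia|]; case: ifP; lia.
- move=> a b /=; rewrite !size_hp // => h; apply/val_inj => /=.
  move: h (ltn_ord a) (ltn_ord b).
  case: ifP => ha; case: ifP => hb; try move/eqP in ha; try move/eqP in hb; (try case: ifP => hc); (try case: ifP => hd); try move/eqP in hc; try move/eqP in hd; try lia.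
- move=> j; rewrite -size_poly_eq0 size_hp //; case: ifP => // _; case: ifP => _; apply/eqP; lia.
- exact: Hentry.
Qed.

Lemma GH0 : Gmat k alpha *m (Hmat k alpha)^T = 0.
Proof.
apply/matrixP => r j; rewrite !mxE.
rewrite -[RHS](orth (ltn_ord r) (ltn_ord j)); apply: eq_bigr => i _.
rewrite Gentry [(_^T) i j]mxE Hentry hornerM; ring.
Qed.
End S.

Unset Implicit Arguments.
Set Strict Implicit.

Theorem theorem3p2 (F : finFieldType) (q n k : nat) (alpha : 'I_n -> F) :
  #|F| = q ->
  (3 <= k)%N -> (k <= n - 2)%N -> (n - 2 <= q - 2)%N ->
  injective alpha ->
  is_parity_check (Gmat k alpha) (Hmat k alpha).
Proof.
move=> _ k3 kn2 _ ainj.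
have kn : (k + 2 <= n)%N by lia.
split; first exact: Hrank.
move=> v; split.
  case/submxP => w -> c /submxP [c' ->].
  by rewrite trmx_mul mulmxA -(mulmxA c') GH0 // mulmx0 mul0mx.
move=> h.
have vK : (v <= kermx (Gmat k alpha)^T)%MS.
  rewrite sub_kermx; apply/eqP.
  have hG : Gmat k alpha *m v^T = 0.
    apply/row_matrixP => r; rewrite row_mul row0; apply: h; exact: row_sub.
  by rewrite -[v in v *m _]trmxK -trmx_mul hG trmx0.
apply: submx_trans vK _.
have hHK : (Hmat k alpha <= kermx (Gmat k alpha)^T)%MS.
  by rewrite sub_kermx -[Hmat k alpha]trmxK -trmx_mul GH0 // trmx0.
case: (mxrank_leqif_sup hHK) => _ <-.
by rewrite mxrank_ker mxrank_tr Grank // Hrank.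
Qed.
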